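(* Let $\mathbb{K}$ be a field of characteristic $2$, let $(A,\cdot,\{-,-\},(-)^{\{2\}})$ be a weakly restricted Poisson algebra, and let $\mathcal{B}$ be a linear basis of $A$. Then $A$ is a restricted Poisson algebra if and only if $(xy)^{\{2\}}=x^2y^{\{2\}}+y^2x^{\{2\}}+xy\{x,y\}$ holds for every pair $x,y\in\mathcal{B}$.
   Context: $\mathbb{K}$ has characteristic $2$. A Poisson algebra is a commutative associative (not necessarily unital) $\mathbb{K}$-algebra $(A,\cdot)$ with a Lie bracket satisfying $\{ab,c\}=a\{b,c\}+b\{a,c\}$. It is weakly restricted if there is a map $(-)^{\{2\}}:A\to A$ making $(A,\{,\},(-)^{\{2\}})$ a restricted Lie algebra, i.e. $(\lambda x)^{\{2\}}=\lambda^2x^{\{2\}}$, $\mathrm{ad}_{x^{\{2\}}}=\mathrm{ad}_x^2$, $(x+y)^{\{2\}}=x^{\{2\}}+y^{\{2\}}+\{x,y\}$. It is restricted if moreover $(xy)^{\{2\}}=x^2y^{\{2\}}+y^2x^{\{2\}}+xy\{x,y\}$ for all $x,y\in A$. *)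

(* Defs.v *)
From HB Require Import structures.
From mathcomp Require Import all_boot all_order all_algebra.
Set Implicit Arguments. Unset Strict Implicit. Unset Printing Implicit Defensive.
Import GRing.Theory.
Local Open Scope ring_scope.

(* A : K-vector space (lmodType K); mul : the commutative associative product;
   br : the Poisson (Lie) bracket; sq : the restricted map x |-> x^{[2]}. *)

Section Defs.
Variables (K : fieldType) (A : lmodType K).

Definition bilinear_op (op : A -> A -> A) : Prop :=
  (forall (a : K) x y z, op (a *: x + y) z = a *: op x z + op y z) /\
  (forall (a : K) x y z, op x (a *: y + z) = a *: op x y + op x z).

Definition is_comm_assoc_algebra (mul : A -> A -> A) : Prop :=
  [/\ bilinear_op mul,
      (forall x y, mul x y = mul y x) &
      (forall x y z, mul x (mul y z) = mul (mul x y) z)].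

Definition is_lie_bracket (br : A -> A -> A) : Prop :=
  [/\ bilinear_op br,
      (forall x, br x x = 0) &
      (forall x y z, br x (br y z) + br y (br z x) + br z (br x y) = 0)].

Definition is_poisson (mul br : A -> A -> A) : Prop :=
  [/\ is_comm_assoc_algebra mul, is_lie_bracket br &
      (forall a b c, br (mul a b) c = mul a (br b c) + mul b (br a c))].

(* Restricted Lie algebra in characteristic 2. *)
Definition is_restricted_lie (br : A -> A -> A) (sq : A -> A) : Prop :=
  [/\ (forall (l : K) x, sq (l *: x) = (l ^+ 2) *: sq x),
      (forall x z, br (sq x) z = br x (br x z)) &
      (forall x y, sq (x + y) = sq x + sq y + br x y)].

Definition weakly_restricted_poisson (mul br : A -> A -> A) (sq : A -> A) : Prop :=
  is_poisson mul br /\ is_restricted_lie br sq.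

Definition restricted_identity (mul br : A -> A -> A) (sq : A -> A) (x y : A) : Prop :=
  sq (mul x y) = mul (mul x x) (sq y) + mul (mul y y) (sq x) + mul (mul x y) (br x y).

Definition restricted_poisson (mul br : A -> A -> A) (sq : A -> A) : Prop :=
  weakly_restricted_poisson mul br sq /\
  (forall x y, restricted_identity mul br sq x y).

Definition is_linear_basis (B : A -> Prop) : Prop :=
  (forall x : A, exists (s : seq A) (c : A -> K),
      (forall a, a \in s -> B a) /\ x = \sum_(a <- s) c a *: a) /\
  (forall (s : seq A) (c : A -> K), uniq s -> (forall a, a \in s -> B a) ->
      \sum_(a <- s) c a *: a = 0 -> forall a, a \in s -> c a = 0).

End Defs.

(* Main.v *)
Require Import Defs.
From mathcomp Require Import all_boot all_order all_algebra.
Local Open Scope ring_scope.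
Import GRing.Theory.

Section Aux.
Variables (K : fieldType) (A : lmodType K).

Lemma bil_facts (op : A -> A -> A) : bilinear_op op ->
  [/\ (forall x y z, op (x + y) z = op x z + op y z),
      (forall x y z, op x (y + z) = op x y + op x z),
      (forall (a : K) x z, op (a *: x) z = a *: op x z) &
      (forall (a : K) x z, op x (a *: z) = a *: op x z)].
Proof.
case=> H1 H2.
have Dl : forall x y z, op (x + y) z = op x z + op y z.
  by move=> x y z; have := H1 1 x y z; rewrite !scale1r.
have Dr : forall x y z, op x (y + z) = op x y + op x z.
  by move=> x y z; have := H2 1 x y z; rewrite !scale1r.
have l0 : forall z, op 0 z = 0.
  move=> z; have h := Dl 0 0 z; rewrite addr0 in h.
  by apply/esym/(@addrI _ (op 0 z)); rewrite addr0 -h.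
have r0 : forall z, op z 0 = 0.
  move=> z; have h := Dr z 0 0; rewrite addr0 in h.
  by apply/esym/(@addrI _ (op z 0)); rewrite addr0 -h.
split=> // a x z.
  by have := H1 a x 0 z; rewrite addr0 l0 addr0.
by have := H2 a x z 0; rewrite addr0 r0 addr0.
Qed.

Variables (mul br : A -> A -> A) (sq : A -> A).
Hypothesis c2 : forall x : A, x + x = 0.
Hypothesis mulB : bilinear_op mul.
Hypothesis brB : bilinear_op br.
Hypothesis mulC : forall x y, mul x y = mul y x.
Hypothesis mulA : forall x y z, mul x (mul y z) = mul (mul x y) z.
Hypothesis brxx : forall x, br x x = 0.
Hypothesis leib : forall a b c, br (mul a b) c = mul a (br b c) + mul b (br a c).
Hypothesis sqZ : forall (l : K) x, sq (l *: x) = (l ^+ 2) *: sq x.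
Hypothesis sqD : forall x y, sq (x + y) = sq x + sq y + br x y.

Lemma oppc (x : A) : - x = x.
Proof. by apply/eqP; rewrite eq_sym -subr_eq0 opprK c2. Qed.

Definition G x y := sq (mul x y) + (mul (mul x x) (sq y) + mul (mul y y) (sq x)
  + mul (mul x y) (br x y)).

Lemma G0 x y : restricted_identity mul br sq x y <-> G x y = 0.
Proof.
rewrite /restricted_identity /G; split=> [->|h]; first by rewrite c2.
by rewrite -[LHS]addr0 -h addrA c2 add0r.
Qed.

Let mulD := bil_facts _ mulB.
Let brD := bil_facts _ brB.

Lemma brC x y : br x y = br y x.
Proof.
have := brxx (x + y). case: brD => Dl Dr _ _.
rewrite Dl !Dr !brxx add0r addr0 => /eqP; rewrite addr_eq0 oppc => /eqP //.
Qed.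

Lemma GC x y : G x y = G y x.
Proof. by rewrite /G mulC brC [mul (mul y y) _ + _]addrC. Qed.

Lemma GD x x' y : G (x + x') y = G x y + G x' y.
Proof.
case: mulD => mDl mDr mZl mZr.
rewrite /G mDl sqD !mDl !mDr sqD.
case: brD => bDl bDr _ _.
rewrite bDl !mDr !mDl.
rewrite leib (brC y) leib brxx (brC x) leib (brC x' x).
have z0 : forall u, mul u 0 = 0 by move=> u; have := mZr 0 u 0; rewrite !scale0r.
rewrite !mDr !z0 add0r !mulA (mulC y x') (brC y x) (mulC x' x).
set t1 := mul (mul x y) (br x' y).
set t2 := mul (mul x' y) (br x y).
set t3 := mul (mul y y) (br x x').
set a := sq (mul x y); set b := sq (mul x' y).
set u1 := mul (mul x x) (sq y); set u2 := mul (mul x' x') (sq y).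
set v1 := mul (mul y y) (sq x); set v2 := mul (mul y y) (sq x').
set w1 := mul (mul x y) (br x y); set w2 := mul (mul x' y) (br x' y).
set m := mul (mul x x') (sq y).
rewrite !addrA -(addrA _ m m) c2 addr0.
Ltac cancel t := repeat first [rewrite -(addrA _ t t) c2 addr0 | rewrite [_ + t + _]addrAC].
cancel t3. cancel t1. cancel t2.
Ltac push t := repeat rewrite [_ + t + _]addrAC.
push u1; push v1; push w1; push b; push u2; push v2; push w2; done.
Qed.

Lemma GZ (l : K) x y : G (l *: x) y = l ^+ 2 *: G x y.
Proof.
case: mulD => mDl mDr mZl mZr.
case: brD => _ _ bZl _.
rewrite /G !mZl !mZr sqZ bZl !mZl !mZr !scalerA -expr2 !scalerDr.
by rewrite sqZ mZr.
Qed.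

Lemma G0l y : G 0 y = 0.
Proof.
have h := GD 0 0 y; rewrite addr0 in h.
by apply/esym/(@addrI _ (G 0 y)); rewrite addr0 -h.
Qed.

Lemma Gsum (s : seq A) (c : A -> K) y :
  G (\sum_(a <- s) c a *: a) y = \sum_(a <- s) (c a ^+ 2) *: G a y.
Proof.
elim: s => [|a s IH]; first by rewrite !big_nil G0l.
by rewrite !big_cons GD GZ IH.
Qed.

End Aux.
Arguments G0 {K A mul br sq}.
Arguments Gsum {K A mul br sq}.
Arguments GC {K A mul br sq}.

Theorem mainTheorem9 (K : fieldType) (A : lmodType K)
    (mul br : A -> A -> A) (sq : A -> A) (B : A -> Prop) :
  2%N \in [pchar K] ->
  weakly_restricted_poisson mul br sq ->
  is_linear_basis B ->
  (restricted_poisson mul br sq <->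
   (forall x y, B x -> B y -> restricted_identity mul br sq x y)).
Proof.
move=> ch wr [span _].
have c2 : forall x : A, x + x = 0.
  by move=> x; rewrite -mulr2n -scaler_nat (pcharf0 ch) scale0r.
split; first by case=> _ h x y _ _; apply: h.
move=> hB; split=> // x y.
case: wr => [[[mB mC mA] [bB bxx _] leib] [sqZ _ sqD]].
apply/(G0 c2).
have [s [c [sB ->]]] := span x.
rewrite (Gsum c2 mB bB mC mA bxx leib sqZ sqD).
apply: big1_seq => a /andP [_ ains].
rewrite (GC c2 bB mC bxx).
have [t [d [tB ->]]] := span y.
rewrite (Gsum c2 mB bB mC mA bxx leib sqZ sqD).
rewrite big1_seq ?scaler0 // => b /andP [_ bint].
have := hB b a (tB b bint) (sB a ains).
by move/(G0 c2) ->; rewrite scaler0.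
Qed.
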